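(* Let $X$ be a nonnegative absolutely continuous random variable with pdf $f$ satisfying $$e^{-\alpha x-\beta}\le f(x)\le 1\qquad\text{for all }x\ge0,$$ where $\alpha>0$ and $\beta\ge0$. Let $\overline F(t)=\mathbb P(X>t)$, $\Lambda(t)=-\log\overline F(t)$, $\delta(t)=\mathbb E[X\mid X>t]$, and for $t\ge0$ let $X_t=[X-t\mid X>t]$ be the residual lifetime with pdf $f_t(x)=f(x+t)/\overline F(t)$, $x>0$. Define the residual entropy $$H(X_t)=-\int_t^\infty\frac{f(x)}{\overline F(t)}\log\frac{f(x)}{\overline F(t)}\,\mathrm dx,$$ the weighted residual entropy $$H^w(X_t)=-\int_t^\infty x\,\frac{f(x)}{\overline F(t)}\log\frac{f(x)}{\overline F(t)}\,\mathrm dx,$$ and the residual varentropy $V(X_t)=\int_t^\infty\frac{f(x)}{\overline F(t)}\big(\log\frac{f(x)}{\overline F(t)}\big)^2\mathrm dx-[H(X_t)]^2$. Then for all $t\ge0$, $$V(X_t)\le\alpha\big[\Lambda(t)\delta(t)+H^w(X_t)\big]+\beta\big[\Lambda(t)+H(X_t)\big]-\big[\Lambda(t)+H(X_t)\big]^2.$$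
   Context: $[X\mid B]$ denotes a random variable distributed as $X$ conditional on the event $B$. The convention $0\log0=0$ is used. *)

(* Defs.v *)
From HB Require Import structures.
From mathcomp Require Import all_boot all_order all_algebra.
From mathcomp Require Import all_classical all_reals all_analysis.
Set Implicit Arguments. Unset Strict Implicit. Unset Printing Implicit Defensive.
Import Order.TTheory GRing.Theory Num.Theory.
Import numFieldNormedType.Exports.
Local Open Scope classical_set_scope.
Local Open Scope ring_scope.

Section residual.
Context {R : realType}.
Local Notation mu := (@lebesgue_measure R).

Definition survival d (T : measurableType d) (P : probability T R)
  (X : T -> R) (t : R) : R := fine (P [set w | t < X w]).

Definition cum_hazard d (T : measurableType d) (P : probability T R)
  (X : T -> R) (t : R) : R := - ln (survival P X t).

Definition cond_mean d (T : measurableType d) (P : probability T R)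
  (X : T -> R) (t : R) : R :=
  fine (\int[P]_(w in [set w | t < X w]) (X w)%:E) / survival P X t.

Definition res_entropy d (T : measurableType d) (P : probability T R)
  (X : T -> R) (f : R -> R) (t : R) : R :=
  - Rintegral mu `[t, +oo[
      (fun x => f x / survival P X t * ln (f x / survival P X t)).

Definition wres_entropy d (T : measurableType d) (P : probability T R)
  (X : T -> R) (f : R -> R) (t : R) : R :=
  - Rintegral mu `[t, +oo[
      (fun x => x * (f x / survival P X t) * ln (f x / survival P X t)).

Definition res_varentropy d (T : measurableType d) (P : probability T R)
  (X : T -> R) (f : R -> R) (t : R) : R :=
  Rintegral mu `[t, +oo[
      (fun x => f x / survival P X t * (ln (f x / survival P X t)) ^+ 2)
  - (res_entropy P X f t) ^+ 2.

End residual.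

(* Main.v *)
Require Import Defs.
From HB Require Import structures.
From mathcomp Require Import all_boot all_order all_algebra.
From mathcomp Require Import all_classical all_reals all_analysis.
From mathcomp Require Import measurable_realfun.
From mathcomp Require Import ring lra.
Import Order.TTheory GRing.Theory Num.Theory.
Import numFieldNormedType.Exports.
Local Open Scope classical_set_scope.
Local Open Scope ring_scope.
Import HBNNSimple.

Section cov.
Local Open Scope ereal_scope.
Context d (T : measurableType d) (R : realType).
Variables (nu mu : {measure set T -> \bar R}) (g : T -> R).
Hypothesis g0 : forall x, (0 <= g x)%R.
Hypothesis mg : measurable_fun setT g.
Hypothesis nug : forall A, measurable A -> nu A = \int[mu]_(x in A) (g x)%:E.

Lemma cov_dens (f : T -> \bar R) E : (forall x, E x -> 0 <= f x) ->
    measurable E -> measurable_fun E f ->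
  \int[mu]_(x in E) (f x * (g x)%:E) = \int[nu]_(x in E) f x.
Proof.
move=> f0 mE mf.
have mge : measurable_fun E (EFin \o g).
  by apply/measurable_EFinP; exact: measurable_funTS.
pose h := nnsfun_approx mE mf.
have -> : \int[nu]_(x in E) f x =
    lim (\int[nu]_(x in E) (EFin \o h n) x @[n --> \oo]).
  have fE x : E x -> f x = lim ((EFin \o h n) x @[n --> \oo]).
    by move=> Ex; apply/esym/cvg_lim => //; exact: cvg_nnsfun_approx.
  under eq_integral => x /[!inE] /fE -> //.
  apply: monotone_convergence => //.
  - move=> n; apply/measurable_EFinP.
    by apply: (measurable_funS measurableT) => //; exact/measurable_funP.
  - by move=> n x Ex //=; rewrite lee_fin.
  - by move=> x Ex a b ab; rewrite lee_fin; exact/lefP/nd_nnsfun_approx.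
have -> : \int[mu]_(x in E) (f x * (g x)%:E) =
    lim (\int[mu]_(x in E) ((EFin \o h n) x * (g x)%:E) @[n --> \oo]).
  have fg x : E x -> f x * (g x)%:E = lim (((EFin \o h n) x * (g x)%:E) @[n --> \oo]).
    by move=> Ex; apply/esym/cvg_lim => //; apply: cvgeZr;
      [by []|exact: cvg_nnsfun_approx].
  under eq_integral => x /[!inE] /fg -> //.
  apply: monotone_convergence => [//| | |].
  - move=> n; apply/emeasurable_funM => //; apply/measurable_funTS.
      exact/measurable_EFinP.
  - by move=> n x Ex /=; rewrite mule_ge0 ?lee_fin.
  - by move=> x Ex a b ab/=; rewrite lee_wpmul2r ?lee_fin//; exact/lefP/nd_nnsfun_approx.
suff suf n : \int[mu]_(x in E) ((EFin \o h n) x * (g x)%:E) =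
    \int[nu]_(x in E) (EFin \o h n) x.
  by under eq_fun do rewrite suf.
transitivity (\int[nu]_(x in E)
   (\sum_(y \in range (h n)) (y * \1_(h n @^-1` [set y]) x)%:E)); last first.
  by apply: eq_integral => t tE; rewrite /= fimfunE -fsumEFin.
have indich m r : measurable_fun E (fun x => (r * \1_(h m @^-1` [set r]) x)%:E).
  by apply: (measurable_comp measurableT) => //; exact: measurable_funM.
rewrite ge0_integral_fsum//; last by move=> m y Ey; exact: nnfun_muleindic_ge0.
transitivity (\int[mu]_(x in E) (\sum_(y \in range (h n))
    (y * \1_(h n @^-1` [set y]) x)%:E * (g x)%:E)).
  under [RHS]eq_integral => x xE.
    rewrite -ge0_mule_fsuml => [|y]; last exact: nnfun_muleindic_ge0.
    rewrite fsumEFin // -(fimfunE _ x); over.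
  by [].
rewrite ge0_integral_fsum//; last 2 first.
  - by move=> y; apply: emeasurable_funM => //.
  - move=> m y Ey; apply: mule_ge0; last by rewrite lee_fin.
    rewrite EFinM; exact: nnfun_muleindic_ge0.
apply: eq_fsbigr => r rhn.
under [RHS]eq_integral do rewrite EFinM.
rewrite integralZl_indic_nnsfun => //.
under eq_integral do rewrite EFinM -muleA.
rewrite ge0_integralZl//.
- under eq_integral do rewrite muleC.
  rewrite (eq_integral ((EFin \o g) \_ (h n @^-1` [set r]))); last first.
    by move=> x xE; rewrite epatch_indic.
  rewrite -integral_mkcondr -nug; last exact: measurableI.
  by rewrite integral_indic// setIC.
- apply: emeasurable_funM; first exact/measurable_EFinP.
  exact: mge.
- by move=> x _; rewrite mule_ge0 ?lee_fin.
- by move: rhn => /set_mem [x _ <-]; rewrite lee_fin.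
Qed.
End cov.

Section rint.
Context {R : realType}.
Local Notation mu := (@lebesgue_measure R).

Lemma RintL2 (D : set R) (u v : R -> R) (a b : R) : measurable D ->
  mu.-integrable D (EFin \o u) -> mu.-integrable D (EFin \o v) ->
  Rintegral mu D (fun x => a * u x + b * v x) =
  a * Rintegral mu D u + b * Rintegral mu D v.
Proof.
move=> mD iu iv.
have iau : mu.-integrable D (EFin \o (fun x => a * u x)).
  apply: (@eq_integrable _ _ _ mu D mD (fun x => (a%:E * (EFin \o u) x)%E)); last exact: (@integrableZl _ _ _ mu D mD).
  by move=> x _ /=; rewrite EFinM.
have ibv : mu.-integrable D (EFin \o (fun x => b * v x)).
  apply: (@eq_integrable _ _ _ mu D mD (fun x => (b%:E * (EFin \o v) x)%E)); last exact: (@integrableZl _ _ _ mu D mD).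
  by move=> x _ /=; rewrite EFinM.
by rewrite RintegralD // !RintegralZl.
Qed.

Lemma integrableL2 (D : set R) (u v : R -> R) (a b : R) : measurable D ->
  mu.-integrable D (EFin \o u) -> mu.-integrable D (EFin \o v) ->
  mu.-integrable D (EFin \o (fun x => a * u x + b * v x)).
Proof.
move=> mD iu iv.
apply: (@eq_integrable _ _ _ mu D mD ((fun x => (a%:E * (EFin \o u) x)%E) \+ (fun x => (b%:E * (EFin \o v) x)%E))%E).
  by move=> x _ /=; rewrite EFinD !EFinM.
by apply: (@integrableD _ _ _ mu D mD); apply: (@integrableZl _ _ _ mu D mD).
Qed.

Lemma RintL3 (D : set R) (u v w : R -> R) (a b c : R) : measurable D ->
  mu.-integrable D (EFin \o u) -> mu.-integrable D (EFin \o v) ->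
  mu.-integrable D (EFin \o w) ->
  Rintegral mu D (fun x => a * u x + b * v x + c * w x) =
  a * Rintegral mu D u + b * Rintegral mu D v + c * Rintegral mu D w.
Proof.
move=> mD iu iv iw.
have iuv := @integrableL2 D u v a b mD iu iv.
rewrite -RintL2 //.
have := @RintL2 D (fun x => a * u x + b * v x) w 1 c mD iuv iw.
rewrite mul1r => <-.
by apply: eq_Rintegral => x _; rewrite mul1r.
Qed.

End rint.


Section pdist.
Context d (T : measurableType d) (R : realType) (P : probability T R)
  (X : {RV P >-> R}).

Definition pdist : set (measurableTypeR R) -> \bar R := fun A => P (X @^-1` A).

Lemma pdist_mX : measurable_fun (T:=T) (U:=measurableTypeR R) setT
   (X : T -> measurableTypeR R).
Proof. by move=> mT B mB; exact: (measurable_funPT X) mT B mB. Qed.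

Let pdist0 : pdist set0 = 0%E.
Proof. by rewrite /pdist preimage_set0 measure0. Qed.

Let pdist_ge0 A : (0 <= pdist A)%E.
Proof. exact: measure_ge0. Qed.

Let pdist_sigma_additive : semi_sigma_additive pdist.
Proof.
move=> F mF tF mUF; rewrite /pdist preimage_bigcup.
apply: measure_semi_sigma_additive.
- by move=> n; rewrite -[X in measurable X]setTI; exact: pdist_mX.
- apply/trivIsetP => /= i j _ _ ij; rewrite -preimage_setI.
  by move/trivIsetP : tF => /(_ _ _ _ _ ij) ->//; rewrite preimage_set0.
- by rewrite -preimage_bigcup -[X in measurable X]setTI; exact: pdist_mX.
Qed.

HB.instance Definition _ := isMeasure.Build _ _ _ pdist
  pdist0 pdist_ge0 pdist_sigma_additive.

End pdist.


Lemma integrableL3 {R : realType} (D : set R) (u v w : R -> R) (a b c : R) :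
  measurable D ->
  (@lebesgue_measure R).-integrable D (EFin \o u) ->
  (@lebesgue_measure R).-integrable D (EFin \o v) ->
  (@lebesgue_measure R).-integrable D (EFin \o w) ->
  (@lebesgue_measure R).-integrable D
     (EFin \o (fun x => a * u x + b * v x + c * w x)).
Proof.
move=> mD iu iv iw.
have := @integrableL2 R D (fun x => a * u x + b * v x) w 1 c mD
  (@integrableL2 R D u v a b mD iu iv) iw.
apply: (@eq_integrable _ _ _ (@lebesgue_measure R) D mD).
by move=> x _ /=; rewrite mul1r.
Qed.

Lemma final_ineq {R : realType} (S l K J0 J1 I1 a b : R) : 0 < S ->
  K + a * J1 + b * J0 <= 0 ->
  (S^-1 * K + (- (2 * l) / S) * J0 + (l ^+ 2 / S) * S)
    - (- (S^-1 * J0 + (- l / S) * S)) ^+ 2 <=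
  a * ((- l) * (I1 / S) + - (S^-1 * J1 + (- l / S) * I1))
  + b * (- l + - (S^-1 * J0 + (- l / S) * S))
  - (- l + - (S^-1 * J0 + (- l / S) * S)) ^+ 2.
Proof.
move=> S0 H; rewrite -subr_ge0.
have -> : a * ((- l) * (I1 / S) + - (S^-1 * J1 + (- l / S) * I1))
  + b * (- l + - (S^-1 * J0 + (- l / S) * S))
  - (- l + - (S^-1 * J0 + (- l / S) * S)) ^+ 2 -
  ((S^-1 * K + (- (2 * l) / S) * J0 + (l ^+ 2 / S) * S)
    - (- (S^-1 * J0 + (- l / S) * S)) ^+ 2) = S^-1 * (- (K + a * J1 + b * J0)).
  by field; rewrite gt_eqF.
apply: mulr_ge0; first by rewrite invr_ge0 ltW.
by rewrite oppr_ge0.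
Qed.

Theorem theorem3p9 (R : realType) (d : measure_display) (T : measurableType d)
  (P : probability T R) (X : {RV P >-> R}) (f : R -> R) (alpha beta : R)
  (X_ge0 : forall w, 0 <= X w)
  (f_meas : measurable_fun setT f)
  (f_ge0 : forall x, 0 <= f x)
  (X_pdf : forall A, measurable A ->
     P (X @^-1` A) = (\int[lebesgue_measure]_(x in A) (f x)%:E)%E)
  (alpha_gt0 : 0 < alpha) (beta_ge0 : 0 <= beta)
  (f_bounds : forall x, 0 <= x -> expR (- alpha * x - beta) <= f x <= 1)
  (int_xf : lebesgue_measure.-integrable `[0, +oo[
              (fun x => (x * f x)%:E))
  (int_flogf : lebesgue_measure.-integrable `[0, +oo[
              (fun x => (f x * ln (f x))%:E))
  (int_xflogf : lebesgue_measure.-integrable `[0, +oo[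
              (fun x => (x * f x * ln (f x))%:E))
  (int_flog2f : lebesgue_measure.-integrable `[0, +oo[
              (fun x => (f x * (ln (f x)) ^+ 2)%:E))
  (t : R) (t_ge0 : 0 <= t) :
  res_varentropy P X f t <=
    alpha * (cum_hazard P X t * cond_mean P X t + wres_entropy P X f t)
    + beta * (cum_hazard P X t + res_entropy P X f t)
    - (cum_hazard P X t + res_entropy P X f t) ^+ 2.
Proof.
set mu := (@lebesgue_measure R).
set D : set R := [set` `[t, +oo[].
have mD : measurable D by exact: measurable_itv.
have D0 : D `<=` `[0, +oo[.
  by move=> x; rewrite /D /= !in_itv /= !andbT; apply: le_trans.
have Dge0 : forall x, D x -> 0 <= x.
  by move=> x /D0; rewrite /= in_itv /= andbT.
have fpos : forall x, D x -> 0 < f x.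
  move=> x /Dge0 /f_bounds /andP[+ _]; apply: lt_le_trans; exact: expR_gt0.
have iD : forall g : R -> R, mu.-integrable `[0, +oo[ (EFin \o g) ->
    mu.-integrable D (EFin \o g).
  by move=> g; apply: integrableS.
have mEf : measurable_fun setT (EFin \o f) by exact/measurable_EFinP.
have If : mu.-integrable setT (EFin \o f).
  apply/integrableP; split => //.
  rewrite (_ : (\int[mu]_x `|(EFin \o f) x|)%E = (\int[mu]_x (EFin \o f) x)%E); last first.
    by apply: eq_integral => x _ /=; rewrite ger0_norm.
  by rewrite -X_pdf // preimage_setT probability_setT ltry.
have IfD : mu.-integrable D (EFin \o f) by apply: integrableS If.
have IxfD := iD _ int_xf.
have IflD := iD _ int_flogf.
have IxflD := iD _ int_xflogf.
have Ifl2D := iD _ int_flog2f.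
have Eset : [set w | t < X w] = X @^-1` `]t, +oo[.
  by apply/seteqP; split => w /=; rewrite in_itv /= andbT.
set S := survival P X t.
have SE : S = Rintegral mu D f.
  rewrite /S /survival Eset X_pdf // integral_itv_obnd_cbnd //.
  exact: measurable_funTS.
have S0 : 0 < S.
  rewrite /S /survival Eset X_pdf // integral_itv_obnd_cbnd; last first.
    exact: measurable_funTS.
  apply: fine_gt0; apply/andP; split; last first.
    move: (@integrable_fin_num _ _ _ mu D mD _ IfD); rewrite ge0_fin_numE //.
    by apply: integral_ge0 => x Dx; rewrite lee_fin.
  set c := expR (- alpha * (t + 1) - beta).
  have c0 : (0 < c%:E)%E by rewrite lte_fin expR_gt0.
  apply: (lt_le_trans c0).
  pose J : set R := [set` `[t, t + 1]].
  have sub : J `<=` D.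
    by move=> x; rewrite /D /= !in_itv /= andbT => /andP[].
  apply: (@le_trans _ _ (\int[mu]_(x in J) (f x)%:E)%E); last first.
    apply: (@ge0_subset_integral _ _ _ mu J D (measurable_itv _) mD) => //.
      exact: measurable_funTS.
    by move=> x _; rewrite lee_fin.
  apply: (@le_trans _ _ (\int[mu]_(x in J) (cst c%:E x))%E).
    have mJ : (mu J = 1)%E.
      have := @lebesgue_measure_itv R `[t, t + 1].
      rewrite /= lte_fin ltrDl ltr01 -EFinB addrAC subrr add0r.
      exact.
    have IC : (\int[mu]_(x in J) (cst c%:E x) = c%:E :> \bar R)%E.
      rewrite integral_cst; last exact: measurable_itv.
      rewrite -[X in _ = X](mule1 c%:E).
      by congr (_ * _)%E; exact: mJ.
    by rewrite IC.
  apply: (@ge0_le_integral _ _ _ mu J (measurable_itv _)).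
  - by move=> x _; rewrite lee_fin ltW // expR_gt0.
  - exact: measurable_cst.
  - exact: measurable_funTS.
  move=> x; rewrite /J /= in_itv /= => /andP[tx xt1]; rewrite lee_fin.
  have /andP[+ _] := f_bounds x (le_trans t_ge0 tx); apply: le_trans.
  by rewrite ler_expR lerD2r !mulNr lerN2 ler_pM2l.
have CM : cond_mean P X t = Rintegral mu D (fun x => x * f x) / S.
  rewrite /cond_mean -/S; congr (_ / _); rewrite Eset.
  have mE : measurable (`]t, +oo[ : set (measurableTypeR R)).
    exact: measurable_itv.
  have E1 : (\int[@pdist _ _ _ P X]_(y in `]t, +oo[) (y%:E) =
      \int[P]_(w in X @^-1` `]t, +oo[) ((X w)%:E))%E.
    apply: (@ge0_integral_pushforward _ _ _ _ _ _ (@pdist_mX _ _ _ P X) P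
             `]t, +oo[ EFin mE).
    - exact: EFin_measurable.
    - move=> y; rewrite inE /= in_itv /= andbT => ty.
      by rewrite lee_fin (le_trans t_ge0) // ltW.
  rewrite -E1.
  have fm : measurable_fun (T:=measurableTypeR R) setT f.
    by move=> mT B mB; exact: f_meas mT B mB.
  have nug : forall A : set (measurableTypeR R), measurable A ->
      @pdist _ _ _ P X A = (\int[mu]_(x in A) (f x)%:E)%E.
    by move=> A mA; exact: (X_pdf A mA).
  have h0 : forall y : measurableTypeR R, [set` `]t, +oo[] y -> (0 <= y%:E)%E.
    move=> y; rewrite /= in_itv /= andbT => ty.
    by rewrite lee_fin (le_trans t_ge0) // ltW.
  have mEF : measurable_fun (T:=measurableTypeR R) `]t, +oo[ (fun y : R => y%:E).
    by apply/measurable_EFinP; exact: measurable_funTS.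
  rewrite -(@cov_dens _ (measurableTypeR R) R (@pdist _ _ _ P X) mu f f_ge0 fm nug
     (fun y : R => y%:E) [set` `]t, +oo[] h0 mE mEF).
  rewrite /Rintegral; congr fine.
  under eq_integral do rewrite -EFinM.
  rewrite integral_itv_obnd_cbnd //.
  apply/measurable_EFinP; apply: measurable_funTS.
  exact: measurable_funM.
set l := ln S.
have lnfS : forall x, D x -> ln (f x / S) = ln (f x) - l.
  by move=> x Dx; rewrite ln_div // qualifE /= ?fpos.
have SneqR : S != 0 by rewrite gt_eqF.
have HE : res_entropy P X f t =
    - (S^-1 * Rintegral mu D (fun x => f x * ln (f x))
       + (- l / S) * Rintegral mu D f).
  rewrite /res_entropy -/S -RintL2 //; congr (- _); apply: eq_Rintegral => x.
  rewrite inE => Dx; rewrite lnfS //; field.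
  done.
have HwE : wres_entropy P X f t =
    - (S^-1 * Rintegral mu D (fun x => x * f x * ln (f x))
       + (- l / S) * Rintegral mu D (fun x => x * f x)).
  rewrite /wres_entropy -/S -RintL2 //; congr (- _); apply: eq_Rintegral => x.
  rewrite inE => Dx; rewrite lnfS //; field.
  done.
have VE : res_varentropy P X f t =
    (S^-1 * Rintegral mu D (fun x => f x * ln (f x) ^+ 2)
     + (- (2 * l) / S) * Rintegral mu D (fun x => f x * ln (f x))
     + (l ^+ 2 / S) * Rintegral mu D f) - (res_entropy P X f t) ^+ 2.
  rewrite /res_varentropy -/S -RintL3 //; congr (_ - _); apply: eq_Rintegral => x.
  rewrite inE => Dx; rewrite lnfS //; field.
  done.
have CH : cum_hazard P X t = - l by [].
rewrite VE HE HwE CH CM -SE.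
apply: final_ineq => //.
have -> : Rintegral mu D (fun x => f x * ln (f x) ^+ 2) +
   alpha * Rintegral mu D (fun x => x * f x * ln (f x)) +
   beta * Rintegral mu D (fun x => f x * ln (f x)) =
   Rintegral mu D (fun x => 1 * (f x * ln (f x) ^+ 2) +
     alpha * (x * f x * ln (f x)) + beta * (f x * ln (f x))).
  by rewrite RintL3 // mul1r.
have -> : (0 : R) = Rintegral mu D (fun _ => 0).
  by rewrite Rintegral_cst // mul0r.
apply: le_Rintegral => //.
- exact: (@integrableL3 R D _ _ _ 1 alpha beta mD Ifl2D IxflD IflD).
- exact: integrable0.
move=> x Dx.
have fx0 := f_ge0 x.
have /andP[lo hi] := f_bounds x (Dge0 x Dx).
have L0 : ln (f x) <= 0 by apply: ln_le0.
have L1 : - alpha * x - beta <= ln (f x).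
  by rewrite -ler_expR lnK // qualifE /= fpos.
have nL : 0 <= - ln (f x) by rewrite oppr_ge0.
have pL : 0 <= ln (f x) + alpha * x + beta by lra.
have := mulr_ge0 (mulr_ge0 fx0 nL) pL.
by move=> h; nra.
Qed.
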